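(* Let $G$ be a connected graph, $(u,v)\in V_p$ and $w\in V(G)$. Then $r_w(u,v)=\frac12$ if and only if $w\in\{u,v\}$ and $V_i(u)\setminus\{v\}=V_i(v)\setminus\{u\}$ for every $1\le i\le\mathrm{diam}(G)$, where $V_i(x)=\{y\in V(G)\setminus\{x\}: d(x,y)=i\}$.
   Context: Graphs are finite, simple and connected; $d(u,v)$ denotes the shortest-path distance. $V_p$ denotes the set of all unordered pairs $(u,v)$ of distinct vertices. A vertex $x$ resolves the pair $(u,v)$ if $d(x,u)\neq d(x,v)$. For $(u,v)\in V_p$, $R(u,v)$ is the set of all vertices resolving $(u,v)$. The resolving share of a vertex $w$ for $(u,v)$ is $r_w(u,v)=\frac{1}{|R(u,v)|}$ if $w$ resolves $u$ and $v$, and $r_w(u,v)=0$ otherwise. *)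

(* Defs.v *)
From mathcomp Require Import all_boot all_order all_algebra.
Set Implicit Arguments. Unset Strict Implicit. Unset Printing Implicit Defensive.
Import Order.TTheory GRing.Theory Num.Theory.

Section Graph.
Variables (T : finType) (e : rel T).

Definition simple_graph : Prop := symmetric e /\ irreflexive e.
Definition connected_graph : Prop := forall x y : T, connect e x y.

Definition walkn (x y : T) (n : nat) : bool :=
  [exists p : n.-tuple T, path e x p && (last x p == y)].

(* shortest-path distance: least n < #|T| admitting a walk of length n
   (in a connected graph such an n always exists). *)
Definition dist (x y : T) : nat :=
  \big[minn/#|T|]_(n < #|T| | walkn x y n) n.

Definition diam : nat := \max_(x : T) \max_(y : T) dist x y.

Definition Vi (i : nat) (x : T) : {set T} :=
  [set y | (y != x) && (dist x y == i)].

Definition resolving_set (u v : T) : {set T} :=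
  [set x | dist x u != dist x v].

Definition rshare (w u v : T) : rat :=
  if w \in resolving_set u v then ((#|resolving_set u v|%:R)^-1)%R else 0%R.
End Graph.

(* Main.v *)
Require Import Defs.
From mathcomp Require Import all_boot all_order all_algebra.
Import Order.TTheory GRing.Theory Num.Theory.

Section Aux.
Variables (T : finType) (e : rel T).

Lemma walkn_sym (He : symmetric e) x y n : walkn e x y n -> walkn e y x n.
Proof.
move=> /existsP [p /andP [Hp /eqP Hl]].
apply/existsP.
have Hs : size (rev (belast x p)) == n by rewrite size_rev size_belast size_tuple.
exists (Tuple Hs) => /=.
rewrite -Hl rev_path.
apply/andP; split.
  rewrite (@eq_path _ (fun z : T => e^~ z) e) //.

case/lastP: (tval p) => [|q z] /=; first by [].
by rewrite belast_rcons last_rcons rev_cons last_rcons.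
Qed.

Lemma dist_sym (He : symmetric e) x y : dist e x y = dist e y x.
Proof.
apply: eq_bigl => n; apply/idP/idP; exact: walkn_sym.
Qed.

Lemma bigmin_le (I : eqType) (s : seq I) (P : pred I) (F : I -> nat) m i :
  i \in s -> P i -> (\big[minn/m]_(j <- s | P j) F j <= F i)%N.
Proof.
elim: s => [//|a s IH]; rewrite inE big_cons => /orP [/eqP <-|Hi] Pi.
  by rewrite Pi geq_minl.
case: ifP => _; last exact: IH.
by rewrite geq_min IH ?orbT.
Qed.

Lemma dist_xx x : dist e x x = 0%N.
Proof.
have Hpos : (0 < #|T|)%N by apply/card_gt0P; exists x.
apply/eqP; rewrite -leqn0 /dist.
apply: (@bigmin_le _ _ _ (fun n : 'I_#|T| => nat_of_ord n) _ (Ordinal Hpos)).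
  by rewrite mem_index_enum.
apply/existsP; exists [tuple] => /=. by [].
Qed.

Lemma dist_pos x y : x != y -> (0 < dist e x y)%N.
Proof.
move=> Hxy.
have Hpos : (0 < #|T|)%N by apply/card_gt0P; exists x.
rewrite /dist; apply: (big_ind (fun m => 0 < m)%N) => //.
  by move=> a b Ha Hb; rewrite leq_min Ha Hb.
move=> i /existsP [p /andP [_ Hl]].
rewrite lt0n; apply/negP => /eqP Hi.
move: p Hl; rewrite Hi => p; rewrite tuple0 /=.
by rewrite (negbTE Hxy).
Qed.

Lemma dist_le_diam x y : (dist e x y <= diam e)%N.
Proof.
apply: leq_trans (leq_bigmax x).
exact: (leq_bigmax (F := fun y => dist e x y) y).
Qed.

End Aux.

Theorem lemma2p5 (T : finType) (e : rel T) (u v w : T) :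
  simple_graph e -> connected_graph e -> u != v ->
  (rshare e w u v = ((2%:R)^-1)%R :> rat <->
   (w \in [set u; v] /\
    forall i : nat, (1 <= i <= diam e)%N ->
      Vi e i u :\ v = Vi e i v :\ u)).
Proof.
move=> [He _] _ Huv.
set R := resolving_set e u v.
have HuR : u \in R.
  rewrite inE dist_xx eq_sym -lt0n; exact: dist_pos.
have HvR : v \in R.
  by rewrite inE dist_xx -lt0n dist_pos // eq_sym.
have Hsub : [set u; v] \subset R.
  by apply/subsetP => z /set2P [] ->.
have Key : R = [set u; v] <->
   (forall i : nat, (1 <= i <= diam e)%N -> Vi e i u :\ v = Vi e i v :\ u).
  split.
    move=> HR i Hi; apply/setP => y; rewrite !inE.
    have [->|Hyv] := eqVneq y v; first by rewrite /= !andbF.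
    have [->|Hyu] := eqVneq y u; first by [].
    have : y \notin R by rewrite HR !inE negb_or Hyu Hyv.
    rewrite inE negbK => /eqP Hd.
    by rewrite (@dist_sym _ _ He u) (@dist_sym _ _ He v) Hd.
  move=> H; apply/eqP; rewrite eqEsubset Hsub andbT.
  apply/subsetP => y; rewrite !inE.
  have [->|Hyu] := eqVneq y u; first by [].
  have [->|Hyv] := eqVneq y v; first by [].
  move=> /negP Hn; exfalso; apply: Hn; apply/eqP.
  have Hi : (1 <= dist e u y <= diam e)%N.
    by rewrite dist_pos 1?eq_sym // dist_le_diam.
  have := H _ Hi; move/setP => /(_ y); rewrite !inE Hyu Hyv eqxx /=.
  by move/esym/eqP; rewrite (@dist_sym _ _ He u) (@dist_sym _ _ He v) => ->.
rewrite /rshare -/R.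
split.
  case: ifP => HwR; last first.
    by move/eqP; rewrite eq_sym invr_eq0 pnatr_eq0.
  move/invr_inj/eqP; rewrite eqr_nat => /eqP Hc.
  have HR : R = [set u; v].
    by apply/esym/eqP; rewrite eqEcard Hsub cards2 Huv Hc.
  by split; [rewrite -HR | apply/Key].
move=> [Hw /Key HR]; rewrite HR Hw cards2 Huv. by [].
Qed.
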